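(* Let $m\ge2$, $d\ge1$, $\sigma$ an invertible real $m\times m$ matrix and $A_1,\dots,A_d$ real $m\times m$ matrices, $G_l:=A_l\sigma-\sigma^*A_l^*$, and assume the Hörmander condition: there is $\lambda>0$ with $\sum_{i,j=1}^m|\sum_{l=1}^d(G_l)_{ij}a_l|^2\ge\lambda|a|^2$ for all $a\in\mathbb{R}^d$. Then there are constants $c_1(G),c_2(G)>0$ depending only on $G_1,\dots,G_d$ such that for all $f\in C^3(\mathbb{R}^{m+d})$ and $r>0$, $$\Gamma_2(f)+r\,\Gamma_2^Z(f)\ge\frac{(Lf)^2}{m}+\frac{c_2(G)\,\Gamma^Z(f)}{4}-\frac{c_1(G)}{r}\Gamma(f).$$
   Context: On $\mathbb{R}^{m+d}$ with coordinates $(x,y)$: $X_i=\sum_{k=1}^m\sigma_{ki}\partial_{x_k}+\sum_{l=1}^d(A_lx)_i\partial_{y_l}$ ($1\le i\le m$), $L=\frac12\sum_{i=1}^mX_i^2$, $\Gamma(f,g)=\frac12\sum_{i=1}^m(X_if)(X_ig)$, $\Gamma^Z(f,g)=\frac12\sum_{l=1}^d(\partial_{y_l}f)(\partial_{y_l}g)$, $\Gamma(f)=\Gamma(f,f)$, $\Gamma^Z(f)=\Gamma^Z(f,f)$, $\Gamma_2(f)=\frac12L\Gamma(f,f)-\Gamma(f,Lf)$, $\Gamma_2^Z(f)=\frac12L\Gamma^Z(f,f)-\Gamma^Z(f,Lf)$. *)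

(* Defs.v *)
From HB Require Import structures.
From mathcomp Require Import all_boot all_order all_algebra.
From mathcomp Require Import all_classical all_reals all_analysis.
Set Implicit Arguments. Unset Strict Implicit. Unset Printing Implicit Defensive.
Import Order.TTheory GRing.Theory Num.Theory.
Import numFieldNormedType.Exports.
Local Open Scope ring_scope.

(* Points of R^{m+d} are row vectors p : 'rV_(m+d); the x-coordinates are
   p 0 (lshift d k), k < m, and the y-coordinates are p 0 (rshift m l), l < d. *)
Section Carre.
Variable R : realType.
Variables m d : nat.
Local Notation P := 'rV[R]_(m + d).

Definition ebase (j : 'I_(m + d)) : P := delta_mx 0 j.

Definition partial (j : 'I_(m + d)) (g : P -> R) : P -> R :=
  fun p => derive g p (ebase j).

Definition dx (k : 'I_m) (g : P -> R) : P -> R := partial (lshift d k) g.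
Definition dy (l : 'I_d) (g : P -> R) : P -> R := partial (rshift m l) g.

Definition C3 (f : P -> R) : Prop :=
  continuous f /\
  (forall j p, derivable f p (ebase j)) /\
  (forall j, continuous (partial j f)) /\
  (forall j k p, derivable (partial j f) p (ebase k)) /\
  (forall j k, continuous (partial k (partial j f))) /\
  (forall j k l p, derivable (partial k (partial j f)) p (ebase l)) /\
  (forall j k l, continuous (partial l (partial k (partial j f)))).

Variable sigma : 'M[R]_m.
Variable A : 'I_d -> 'M[R]_m.

Definition Xop (i : 'I_m) (g : P -> R) : P -> R := fun p =>
  \sum_(k < m) sigma k i * dx k g p
  + \sum_(l < d) (\sum_(k < m) A l i k * p 0 (lshift d k)) * dy l g p.

Definition Lop (g : P -> R) : P -> R := fun p =>
  2^-1 * \sum_(i < m) Xop i (Xop i g) p.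

Definition Gam (f g : P -> R) : P -> R := fun p =>
  2^-1 * \sum_(i < m) Xop i f p * Xop i g p.

Definition GamZ (f g : P -> R) : P -> R := fun p =>
  2^-1 * \sum_(l < d) dy l f p * dy l g p.

Definition Gam2 (f : P -> R) : P -> R := fun p =>
  2^-1 * Lop (Gam f f) p - Gam f (Lop f) p.

Definition Gam2Z (f : P -> R) : P -> R := fun p =>
  2^-1 * Lop (GamZ f f) p - GamZ f (Lop f) p.

End Carre.

Definition Gmat (R : realType) (m d : nat) (sigma : 'M[R]_m)
  (A : 'I_d -> 'M[R]_m) : 'I_d -> 'M[R]_m :=
  fun l => A l *m sigma - sigma^T *m (A l)^T.

(* Main.v *)
Require Import Defs.
From HB Require Import structures.
From mathcomp Require Import all_boot all_order all_algebra.
From mathcomp Require Import all_classical all_reals all_analysis.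
From mathcomp Require Import ring lra.
Import Order.TTheory GRing.Theory Num.Theory.
Import numFieldNormedType.Exports.
Local Open Scope ring_scope.
Local Open Scope classical_set_scope.
Set Implicit Arguments. Unset Strict Implicit.

Section Alg.
Variable R : realFieldType.

Lemma CS n (x y : 'I_n -> R) :
  (\sum_i x i * y i) ^+ 2 <= (\sum_i x i ^+ 2) * (\sum_i y i ^+ 2).
Proof.
have E1 : (\sum_i x i ^+ 2) * (\sum_i y i ^+ 2) = \sum_i \sum_k x i ^+ 2 * y k ^+ 2.
  by rewrite mulr_suml; apply: eq_bigr => i _; rewrite mulr_sumr.
have E2 : (\sum_i x i * y i) ^+ 2 = \sum_i \sum_k (x i * y i) * (x k * y k).
  by rewrite expr2 mulr_suml; apply: eq_bigr => i _; rewrite mulr_sumr.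
have E3 : \sum_i \sum_k x i ^+ 2 * y k ^+ 2 = \sum_i \sum_k x k ^+ 2 * y i ^+ 2.
  by rewrite exchange_big.
have E4 : 2 * ((\sum_i x i ^+ 2) * (\sum_i y i ^+ 2) - (\sum_i x i * y i) ^+ 2)
    = \sum_i \sum_k (x i * y k - x k * y i) ^+ 2.
  rewrite E1 E2.
  have H : forall a b : R, 2 * (a - b) = a + a - 2 * b by move=> a b; ring.
  rewrite H.
  rewrite {2}E3 -big_split mulr_sumr -sumrB; apply: eq_bigr => i _.
  rewrite -big_split mulr_sumr -sumrB; apply: eq_bigr => k _; simpl; ring.
have : 0 <= \sum_i \sum_k (x i * y k - x k * y i) ^+ 2.
  by apply: sumr_ge0 => i _; apply: sumr_ge0 => k _; exact: sqr_ge0.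
rewrite -E4; set P1 := (\sum_i x i ^+ 2) * (\sum_i y i ^+ 2).
set P2 := (\sum_i x i * y i) ^+ 2; move=> h; lra.
Qed.

Lemma sum_sq_ge n (F : 'I_n -> R) i : F i ^+ 2 <= \sum_j F j ^+ 2.
Proof.
rewrite (bigD1 i) //= lerDl; apply: sumr_ge0 => j _; exact: sqr_ge0.
Qed.


Definition hor m d (G : 'I_d -> 'M[R]_m) (lam : R) := 0 < lam /\
  forall a : 'I_d -> R, lam * \sum_(l < d) a l ^+ 2 <=
     \sum_(i < m) \sum_(j < m) (\sum_(l < d) G l i j * a l) ^+ 2.

Definition c1f m d (G : 'I_d -> 'M[R]_m) : R :=
  2^-1 * \sum_(l < d) \sum_(i < m) \sum_(j < m) G l i j ^+ 2 + 1.

Lemma part1 m d (B : 'I_m -> 'I_m -> R) (z : 'I_d -> R) G lam :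
  (0 < m)%N -> hor G lam -> (forall i j, B i j - B j i = \sum_l G l i j * z l) ->
  (2^-1 * \sum_i B i i) ^+ 2 / m%:R + lam / 2 * (2^-1 * \sum_l z l ^+ 2) / 4
  <= 4^-1 * \sum_i \sum_j B i j ^+ 2.
Proof.
move=> m0 [lam0 Hl] HB.
have m0' : 0 < (m%:R : R) by rewrite ltr0n.
have cs : (\sum_i B i i) ^+ 2 / m%:R <= \sum_i B i i ^+ 2.
  rewrite ler_pdivrMr // mulrC.
  have := CS (fun _ => 1) (fun i => B i i).
  rewrite expr1n sumr_const card_ord.
  by under eq_bigr => i _ do rewrite mul1r.
have E : \sum_i \sum_j B i j ^+ 2 = 4^-1 * (\sum_i \sum_j (B i j + B j i) ^+ 2
     + \sum_i \sum_j (B i j - B j i) ^+ 2).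
  have -> : \sum_i \sum_j (B i j + B j i) ^+ 2 + \sum_i \sum_j (B i j - B j i) ^+ 2
      = 2 * \sum_i \sum_j B i j ^+ 2 + 2 * \sum_i \sum_j B j i ^+ 2.
    rewrite !mulr_sumr -!big_split; apply: eq_bigr => i _ /=.
    rewrite !mulr_sumr -!big_split; apply: eq_bigr => j _ /=; ring.
  rewrite [X in _ + 2 * X]exchange_big /=.
  set T := \sum_i \sum_j B i j ^+ 2.
  have h4 : (4 : R) != 0 by rewrite pnatr_eq0.
  have -> : 2 * T + 2 * T = 4 * T by ring.
  by rewrite mulrA mulVf // mul1r.
have Dg : 4 * \sum_i B i i ^+ 2 <= \sum_i \sum_j (B i j + B j i) ^+ 2.
  rewrite mulr_sumr; apply: ler_sum => i _.
  apply: le_trans (sum_sq_ge (fun j => B i j + B j i) i).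
  by rewrite (_ : (B i i + B i i) ^+ 2 = 4 * B i i ^+ 2) //; ring.
have Hg : lam * \sum_l z l ^+ 2 <= \sum_i \sum_j (B i j - B j i) ^+ 2.
  under [X in _ <= X]eq_bigr => i _ do under eq_bigr => j _ do rewrite HB.
  exact: Hl.
rewrite E.
set S := \sum_i B i i; set Q := \sum_i B i i ^+ 2; set Z := \sum_l z l ^+ 2.
set U := \sum_i \sum_j (B i j + B j i) ^+ 2; set V := \sum_i \sum_j (B i j - B j i) ^+ 2.
set W := S ^+ 2 / m%:R.
have -> : (2^-1 * S) ^+ 2 / m%:R = 4^-1 * W.
  by rewrite /W; field; rewrite gt_eqF.
have -> : lam / 2 * (2^-1 * Z) / 4 = 16^-1 * (lam * Z).
  by field.
set LZ := lam * Z.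
move: cs Dg Hg; rewrite -/W -/Q -/U -/V -/LZ => cs Dg Hg.
lra.
Qed.


Lemma L13 (T1 T2 T3 T4 T5 T6 : R) : T1 + T2 <= T4 -> - T3 <= T5 + T6 ->
  T1 + T2 - T3 <= T4 + T5 + T6.
Proof. by move=> h1 h2; lra. Qed.

Lemma part2 m d (a : 'I_m -> R) (C : 'I_m -> 'I_d -> R) (G : 'I_d -> 'M[R]_m) r :
  0 < r ->
  - (c1f G / r * (2^-1 * \sum_i a i ^+ 2)) <=
  2^-1 * (\sum_i \sum_j a i * \sum_l G l i j * C j l)
  + r * (4^-1 * \sum_j \sum_l C j l ^+ 2).
Proof.
move=> r0.
pose u j l := \sum_i a i * G l i j.
have EK : \sum_i \sum_j a i * \sum_l G l i j * C j l
        = \sum_j \sum_l C j l * u j l.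
  rewrite (eq_bigr (fun i => \sum_j \sum_l a i * (G l i j * C j l))); last first.
    by move=> i _; apply: eq_bigr => j _; rewrite mulr_sumr.
  rewrite exchange_big /=; apply: eq_bigr => j _.
  rewrite exchange_big /=; apply: eq_bigr => l _.
  rewrite /u mulr_sumr; apply: eq_bigr => i _; ring.
set K := \sum_j \sum_l C j l * u j l.
set Q := \sum_j \sum_l C j l ^+ 2.
set U := \sum_j \sum_l u j l ^+ 2.
set A2 := \sum_i a i ^+ 2.
set M := \sum_(l < d) \sum_(i < m) \sum_(j < m) G l i j ^+ 2.
have A20 : 0 <= A2 by apply: sumr_ge0 => i _; exact: sqr_ge0.
have ir0 : 0 < r^-1 by rewrite invr_gt0.
have F1 : 0 <= 2^-1 * K + r * (4^-1 * Q) + 4^-1 * (r^-1 * U).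
  have -> : 2^-1 * K + r * (4^-1 * Q) + 4^-1 * (r^-1 * U)
     = \sum_j \sum_l (4^-1 * r^-1) * (u j l + r * C j l) ^+ 2.
    rewrite /K /Q /U !mulr_sumr -!big_split; apply: eq_bigr => j _ /=.
    rewrite !mulr_sumr -!big_split; apply: eq_bigr => l _ /=.
    by field; rewrite gt_eqF.
  apply: sumr_ge0 => j _; apply: sumr_ge0 => l _.
  apply: mulr_ge0; last exact: sqr_ge0.
  apply: mulr_ge0; last exact: ltW.
  by rewrite invr_ge0 ler0n.
have F2 : U <= A2 * M.
  have -> : M = \sum_j \sum_l \sum_i G l i j ^+ 2.
    rewrite /M (eq_bigr (fun l => \sum_j \sum_i G l i j ^+ 2)); last first.
      by move=> l _; rewrite exchange_big.
    by rewrite exchange_big.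
  rewrite mulr_sumr; apply: ler_sum => j _; rewrite mulr_sumr; apply: ler_sum => l _.
  exact: (CS a (fun i => G l i j)).
have F2' : r^-1 * U <= r^-1 * (A2 * M) by rewrite ler_pM2l.
rewrite EK -/K -/Q.
have -> : c1f G / r * (2^-1 * A2) = 4^-1 * (r^-1 * (A2 * M)) + 2^-1 * (r^-1 * A2).
  by rewrite /c1f -/M; field; rewrite gt_eqF.
have X3 : 0 <= r^-1 * A2 by rewrite mulr_ge0 // ltW.
move: F1 F2' X3; set X1 := r^-1 * U; set X2 := r^-1 * (A2 * M); set X4 := r^-1 * A2.
set Y := r * (4^-1 * Q).
move=> *; lra.
Qed.

End Alg.

Section An.
Variable R : realType.
Variable n : nat.
Local Notation P := 'rV[R]_n.

Lemma isd_cst (c : R) (p e : P) : is_derive p e (fun _ : P => c) 0.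
Proof. exact: is_derive_cst. Qed.

Lemma isd_add (u v : P -> R) p e du dv :
  is_derive p e u du -> is_derive p e v dv ->
  is_derive p e (fun q => u q + v q) (du + dv).
Proof. move=> h1 h2; exact: (is_deriveD h1 h2). Qed.

Lemma isd_mul (u v : P -> R) p e du dv :
  is_derive p e u du -> is_derive p e v dv ->
  is_derive p e (fun q => u q * v q) (u p * dv + v p * du).
Proof. move=> h1 h2; exact: (is_deriveM h1 h2). Qed.

Lemma isd_sum k (h : 'I_k -> P -> R) p e dh :
  (forall i, is_derive p e (h i) (dh i)) ->
  is_derive p e (fun q => \sum_(i < k) h i q) (\sum_(i < k) dh i).
Proof.
move=> H.
have -> : (fun q => \sum_(i < k) h i q) = \sum_(i < k) h i.
  by apply/funext => q; rewrite fct_sumE.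
exact: is_derive_sum.
Qed.

Lemma isd_coord (k : 'I_n) (p e : P) : is_derive p e (fun q : P => q 0 k) (e 0 k).
Proof.
have H : (fun h : R => h^-1 *: (((fun q : P => q 0 k) \o shift p) (h *: e) - p 0 k))
   @ 0^' --> e 0 k.
  apply: cvg_near_cst; near=> h.
  rewrite /= !mxE addrK /GRing.scale /= mulrA mulVf ?mul1r //.
  near: h; exact: nbhs_dnbhs_neq.
split; first by apply/cvg_ex; exists (e 0 k).
exact: cvg_lim H.
Unshelve. all: by end_near. Qed.


Lemma shift_dq (g : P -> R) (q w e : P) :
  (fun h : R => h^-1 *: (((fun x => g (x + w)) \o shift q) (h *: e) - g (q + w)))
  = (fun h : R => h^-1 *: ((g \o shift (q + w)) (h *: e) - g (q + w))).
Proof. by apply/funext => h /=; rewrite addrA. Qed.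

Lemma isd_shift (g : P -> R) (q w e : P) : derivable g (q + w) e ->
  is_derive q e (fun x => g (x + w)) ('D_e g (q + w)).
Proof.
move=> H; split; first by rewrite /derivable shift_dq.
by rewrite /derive shift_dq.
Qed.

Lemma line_dq (G : P -> R) (a e : P) (t : R) :
  (fun h : R => h^-1 *: (((fun s : R => G (a + s *: e)) \o shift t) (h *: 1)
      - G (a + t *: e)))
  = (fun h : R => h^-1 *: ((G \o shift (a + t *: e)) (h *: e) - G (a + t *: e))).
Proof.
apply/funext => h /=; congr (_ *: (G _ - _)).
by rewrite scalerDl /GRing.scale /= mulr1 addrCA addrC.
Qed.

Lemma isd_line (G : P -> R) (a e : P) (t : R) : derivable G (a + t *: e) e ->
  is_derive t 1 (fun s : R => G (a + s *: e)) ('D_e G (a + t *: e)).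
Proof.
move=> H; split; first by rewrite /derivable line_dq.
by rewrite /derive line_dq.
Qed.

Lemma mvt_line (G : P -> R) (a e : P) (h : R) : 0 < h ->
  (forall t, derivable G (a + t *: e) e) ->
  exists2 t, 0 < t < h & G (a + h *: e) - G a = h * 'D_e G (a + t *: e).
Proof.
move=> h0 D.
have := @MVT R (fun s => G (a + s *: e)) (fun s => 'D_e G (a + s *: e)) 0 h h0.
case.
- by move=> x _; apply: isd_line.
- apply: continuous_subspaceT => x.
  have := @ex_derive _ _ _ _ _ _ _ (isd_line (D x)) => /derivable1_diffP.
  exact: differentiable_continuous.
move=> t; rewrite in_itv /= => /andP [t0 th].
rewrite scale0r addr0 subr0 => E.
by exists t; [rewrite t0 th | rewrite E mulrC].
Qed.


Lemma cont_ball (F : P -> R) (p : P) (e : R) : {for p, continuous F} -> 0 < e ->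
  exists2 d, 0 < d & forall q, `|q - p| < d -> `|F q - F p| < e.
Proof.
move=> cF e0.
have H := (cvgrPdist_lt _ _).1 cF e e0; have {}H := H (nbhs_filter p).
have [d d0 Hd] := iffLR (nbhs_normP p _) H.
exists d => // q qp.
have := Hd q; rewrite /ball_ /= => K; rewrite distrC; apply: K.
by rewrite distrC.
Qed.

Lemma isd_sub (u v : P -> R) p e du dv :
  is_derive p e u du -> is_derive p e v dv ->
  is_derive p e (fun q => u q - v q) (du - dv).
Proof. move=> h1 h2; exact: (is_deriveB h1 h2). Qed.

Lemma L1 (a b c dd : R) : a - b - c + dd = a - b - (c - dd).
Proof. by ring. Qed.
Lemma L2 (a b c dd : R) : a - b - c + dd = a - c - b + dd.
Proof. by ring. Qed.
Lemma L3 (a b c : R) : a - b = (c - b) - (c - a).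
Proof. by ring. Qed.

Lemma delta_rep (g : P -> R) (u v p : P) (h : R) : 0 < h ->
  (forall q, derivable g q u) -> (forall q, derivable ('D_u g) q v) ->
  exists t, exists s, [/\ 0 < t < h, 0 < s < h &
   g (p + h *: u + h *: v) - g (p + h *: u) - g (p + h *: v) + g p
     = h * h * 'D_v ('D_u g) (p + t *: u + s *: v)].
Proof.
move=> h0 Du Duv.
pose G := fun q => g (q + h *: v) - g q.
have IG : forall q, is_derive q u G ('D_u g (q + h *: v) - 'D_u g q).
  move=> q; apply: isd_sub; first exact: isd_shift.
  exact: derivableP.
have [t /andP [t0 th] Et] := @mvt_line G p u h h0 (fun t => @ex_derive _ _ _ _ _ _ _ (IG _)).
have [s /andP [s0 sh] Es] := @mvt_line ('D_u g) (p + t *: u) v h h0 (fun s => Duv _).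
exists t, s; split; rewrite ?t0 ?th ?s0 ?sh //.
move: Et; rewrite /G (@derive_val _ _ _ _ _ _ _ (IG _)) Es => Et.
rewrite -mulrA -Et; exact: L1.
Qed.


Lemma small_move (u v : P) (h t s : R) : 0 < h -> 0 < t < h -> 0 < s < h ->
  `|t *: u + s *: v| <= h * (`|u| + `|v|).
Proof.
move=> h0 /andP [t0 th] /andP [s0 sh].
apply: (le_trans (ler_normD _ _)); rewrite !normrZ mulrDr.
by rewrite lerD // ler_wpM2r // ger0_norm ?ltW.
Qed.

Lemma quarter (X : R) : 0 < X -> X / 4 + X / 4 < X.
Proof. move=> X0; lra. Qed.

Lemma mvE (a x y : P) : a + x + y - a = x + y.
Proof. by rewrite addrC !addrA addNr add0r. Qed.

Lemma clairaut_abs (F1 F2 : P -> R) (p : P) (N : R) : 0 <= N ->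
  {for p, continuous F1} -> {for p, continuous F2} ->
  (forall h, 0 < h -> exists q1, exists q2,
     [/\ `|q1 - p| <= h * N, `|q2 - p| <= h * N & F1 q1 = F2 q2]) ->
  F1 p = F2 p.
Proof.
move=> N0 c1 c2 Hr.
apply/eqP; rewrite -subr_eq0; apply/negPn/negP => neq.
have e0 : 0 < `|F1 p - F2 p| / 4 by rewrite divr_gt0 // normr_gt0.
have [d1 d10 H1] := cont_ball c1 e0.
have [d2 d20 H2] := cont_ball c2 e0.
have N1 : 0 < N + 1 by rewrite ltr_wpDl.
pose h := Num.min d1 d2 / (N + 1).
have h0 : 0 < h by rewrite divr_gt0 // lt_min d10 d20.
have hN : h * N < Num.min d1 d2.
  apply: (@lt_le_trans _ _ (h * (N + 1))); first by rewrite ltr_pM2l // ltrDl.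
  by rewrite /h divfK // gt_eqF.
have [q1 [q2 [n1 n2 E]]] := Hr h h0.
have B1 : `|F1 q1 - F1 p| < `|F1 p - F2 p| / 4.
  apply: H1; apply: (le_lt_trans n1); apply: (lt_le_trans hN).
  by rewrite ge_min lexx.
have B2 : `|F2 q2 - F2 p| < `|F1 p - F2 p| / 4.
  apply: H2; apply: (le_lt_trans n2); apply: (lt_le_trans hN).
  by rewrite ge_min lexx orbT.
have : `|F1 p - F2 p| < `|F1 p - F2 p|.
  rewrite {1}(L3 (F1 p) (F2 p) (F1 q1)) {1}E.
  apply: (le_lt_trans (ler_normB _ _)).
  have : `|F1 p - F2 p| / 4 + `|F1 p - F2 p| / 4 < `|F1 p - F2 p|.
    have : 0 < `|F1 p - F2 p| by rewrite normr_gt0.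
    exact: quarter.
  move=> K; apply: (le_lt_trans _ K); apply: lerD; apply: ltW; [exact: B2 | exact: B1].
by rewrite ltxx.
Qed.

Lemma clairaut (g : P -> R) (u v p : P) :
  (forall q, derivable g q u) -> (forall q, derivable g q v) ->
  (forall q, derivable ('D_u g) q v) -> (forall q, derivable ('D_v g) q u) ->
  {for p, continuous ('D_v ('D_u g))} -> {for p, continuous ('D_u ('D_v g))} ->
  'D_v ('D_u g) p = 'D_u ('D_v g) p.
Proof.
move=> Du Dv Duv Dvu c1 c2.
apply: (@clairaut_abs ('D_v ('D_u g)) ('D_u ('D_v g)) p (`|u| + `|v|) _ c1 c2); first by rewrite addr_ge0.
move=> h h0.
have [t1 [s1 [ht1 hs1 E1]]] := delta_rep p h0 Du Duv.
have [t2 [s2 [ht2 hs2 E2]]] := delta_rep p h0 Dv Dvu.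
exists (p + t1 *: u + s1 *: v), (p + t2 *: v + s2 *: u); split.
- by rewrite mvE; exact: small_move.
- by rewrite mvE [t2 *: v + _]addrC; exact: small_move.
apply: (@mulfI _ (h * h)); first by rewrite mulf_neq0 // gt_eqF.
apply: (etrans (esym E1)); apply: (etrans _ E2).
rewrite (addrAC p (h *: v)); exact: L2.
Qed.

End An.

Unset Implicit Arguments.

Section Ops.
Variables (R : realType) (m d : nat) (sigma : 'M[R]_m) (A : 'I_d -> 'M[R]_m).
Local Notation P := 'rV[R]_(m + d).
Local Notation X := (Xop sigma A).
Local Notation e := (@ebase R m d).

Definition w (i : 'I_m) (a : 'I_(m + d)) (q : P) : R :=
  match fintype.split a with
  | inl k => sigma k i
  | inr l => \sum_(k < m) A l i k * q 0 (lshift d k) end.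
Definition w' (i : 'I_m) (a c : 'I_(m + d)) : R :=
  match fintype.split a with
  | inl _ => 0
  | inr l => \sum_(k < m) A l i k * e c 0 (lshift d k) end.

Lemma split_l (k : 'I_m) : fintype.split (lshift d k) = inl k.
Proof. exact: (unsplitK (inl k)). Qed.
Lemma split_r (l : 'I_d) : fintype.split (rshift m l) = inr l.
Proof. exact: (unsplitK (inr l)). Qed.

Lemma XopE i g q : X i g q = \sum_(a < m + d) w i a q * partial a g q.
Proof.
rewrite /Xop big_split_ord /=; congr (_ + _).
  by apply: eq_bigr => k _; rewrite /w split_l.
by apply: eq_bigr => l _; rewrite /w split_r.
Qed.

Lemma XopW i g : X i g = fun q => \sum_(a < m + d) w i a q * partial a g q.
Proof. by apply/funext => q; rewrite XopE. Qed.

Lemma isd_w i a q c : is_derive q (e c) (w i a) (w' i a c).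
Proof.
rewrite /w /w'; case: (fintype.split a) => [k|l].
  exact: isd_cst.
apply: is_derive_eq.
  apply: isd_sum => k; apply: isd_mul; (try exact: isd_cst); (try exact: isd_coord).
by apply: eq_bigr => k _; rewrite mulr0 addr0.
Qed.

Lemma isd_X i g q c : (forall a, derivable (partial a g) q (e c)) ->
  is_derive q (e c) (X i g)
    (\sum_(a < m + d) (w' i a c * partial a g q + w i a q * partial c (partial a g) q)).
Proof.
move=> H; rewrite XopW; apply: is_derive_eq.
  apply: isd_sum => a; apply: isd_mul; first exact: isd_w.
  exact: derivableP.
by apply: eq_bigr => a _; rewrite addrC mulrC.
Qed.


Lemma L4 (w u x v y : R) : w * (u * x + v * y) = u * (w * x) + v * (w * y).
Proof. by ring. Qed.
Lemma L5 (al P W T Q be : R) : al * P + (W * T + Q * be) = be * Q + (W * T + P * al).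
Proof. by ring. Qed.
Lemma L9 (x y z s : R) : x - y = s -> y - z = s -> x - z = 2 * s.
Proof.
move=> h1 h2; have -> : x - z = (x - y) + (y - z) by ring.
by rewrite h1 h2; ring.
Qed.
Lemma L10 (T U s : R) : T - U = s -> T = U + s.
Proof. by move=> <-; ring. Qed.
Lemma L11 (B a T U s : R) : T - U = 2 * s ->
  2^-1 * (2^-1 * (B ^+ 2 + a * T)) - 2^-1 * (a * (2^-1 * U)) = 4^-1 * B ^+ 2 + 2^-1 * (a * s).
Proof. by move=> h; rewrite (L10 _ _ _ h); field. Qed.
Lemma L12 (C z W : R) :
  2^-1 * (2^-1 * (C ^+ 2 + z * W)) - 2^-1 * (z * (2^-1 * W)) = 4^-1 * C ^+ 2.
Proof. by field. Qed.
Lemma L7 (x y z : R) : (x + z) - (y + z) = x - y.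
Proof. by ring. Qed.
Lemma L6 (x y z u v : R) : x * (y * z + u * v) = x * y * z + x * u * v.
Proof. by ring. Qed.

Definition D1 (g : P -> R) := forall a q, derivable g q (e a).

Lemma pM (u v : P -> R) a q : derivable u q (e a) -> derivable v q (e a) ->
  partial a (fun x => u x * v x) q = u q * partial a v q + v q * partial a u q.
Proof.
move=> du dv.
exact: (@derive_val _ _ _ _ _ _ _ (isd_mul (derivableP du) (derivableP dv))).
Qed.

Lemma pS n (u : 'I_n -> P -> R) a q : (forall i, derivable (u i) q (e a)) ->
  partial a (fun x => \sum_(i < n) u i x) q = \sum_(i < n) partial a (u i) q.
Proof.
move=> du.
exact: (@derive_val _ _ _ _ _ _ _ (isd_sum (fun i => derivableP (du i)))).
Qed.

Lemma pB (u v : P -> R) a q : derivable u q (e a) -> derivable v q (e a) ->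
  partial a (fun x => u x - v x) q = partial a u q - partial a v q.
Proof.
move=> du dv.
exact: (@derive_val _ _ _ _ _ _ _ (isd_sub (derivableP du) (derivableP dv))).
Qed.

Lemma pZ (c : R) (u : P -> R) a q : derivable u q (e a) ->
  partial a (fun x => c * u x) q = c * partial a u q.
Proof.
move=> du.
have := @derive_val _ _ _ _ _ _ _ (isd_mul (isd_cst c q (e a)) (derivableP du)).
by rewrite mulr0 addr0; exact.
Qed.

Lemma dM (u v : P -> R) a q : derivable u q (e a) -> derivable v q (e a) ->
  derivable (fun x => u x * v x) q (e a).
Proof. by move=> du dv; exact: (@ex_derive _ _ _ _ _ _ _ (isd_mul (derivableP du) (derivableP dv))). Qed.

Lemma dS n (u : 'I_n -> P -> R) a q : (forall i, derivable (u i) q (e a)) ->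
  derivable (fun x => \sum_(i < n) u i x) q (e a).
Proof. by move=> du; exact: (@ex_derive _ _ _ _ _ _ _ (isd_sum (fun i => derivableP (du i)))). Qed.

Lemma dB (u v : P -> R) a q : derivable u q (e a) -> derivable v q (e a) ->
  derivable (fun x => u x - v x) q (e a).
Proof. by move=> du dv; exact: (@ex_derive _ _ _ _ _ _ _ (isd_sub (derivableP du) (derivableP dv))). Qed.

Lemma dZ (c : R) (u : P -> R) a q : derivable u q (e a) ->
  derivable (fun x => c * u x) q (e a).
Proof. by move=> du; exact: (@ex_derive _ _ _ _ _ _ _ (isd_mul (isd_cst c q (e a)) (derivableP du))). Qed.

Lemma dw i a q c : derivable (w i a) q (e c).
Proof. exact: (@ex_derive _ _ _ _ _ _ _ (isd_w i a q c)). Qed.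

Lemma dX i g q c : (forall a, derivable (partial a g) q (e c)) ->
  derivable (X i g) q (e c).
Proof. by move=> H; exact: (@ex_derive _ _ _ _ _ _ _ (isd_X i g q c H)). Qed.

Lemma pX i g q c : (forall a, derivable (partial a g) q (e c)) ->
  partial c (X i g) q =
  \sum_(a < m + d) (w' i a c * partial a g q + w i a q * partial c (partial a g) q).
Proof. by move=> H; exact: (@derive_val _ _ _ _ _ _ _ (isd_X i g q c H)). Qed.

Lemma XopM j (u v : P -> R) q : (forall a, derivable u q (e a)) ->
  (forall a, derivable v q (e a)) ->
  X j (fun x => u x * v x) q = u q * X j v q + v q * X j u q.
Proof.
move=> du dv; rewrite !XopE !mulr_sumr -big_split /=.
by apply: eq_bigr => a _; rewrite pM //; exact: L4.
Qed.

Lemma XopS j n (u : 'I_n -> P -> R) q : (forall i a, derivable (u i) q (e a)) ->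
  X j (fun x => \sum_(i < n) u i x) q = \sum_(i < n) X j (u i) q.
Proof.
move=> du; rewrite XopE.
under eq_bigr => a _ do rewrite pS // mulr_sumr.
rewrite exchange_big /=; apply: eq_bigr => i _.
by rewrite XopE.
Qed.

Lemma XopB j (u v : P -> R) q : (forall a, derivable u q (e a)) ->
  (forall a, derivable v q (e a)) ->
  X j (fun x => u x - v x) q = X j u q - X j v q.
Proof.
move=> du dv; rewrite !XopE -sumrB.
by apply: eq_bigr => a _; rewrite pB // mulrBr.
Qed.

Lemma XopZ j (c : R) (u : P -> R) q : (forall a, derivable u q (e a)) ->
  X j (fun x => c * u x) q = c * X j u q.
Proof.
move=> du; rewrite !XopE mulr_sumr.
by apply: eq_bigr => a _; rewrite pZ // mulrCA.
Qed.


Definition sym2 (g : P -> R) q :=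
  forall a b, partial b (partial a g) q = partial a (partial b g) q.

Lemma ebaseE (c x : 'I_(m + d)) : e c 0 x = (x == c)%:R.
Proof. by rewrite /ebase mxE eqxx. Qed.

Lemma sum_delta (F : 'I_(m + d) -> R) x : \sum_c F c * e c 0 x = F x.
Proof.
rewrite (bigD1 x) //= ebaseE eqxx mulr1 big1 ?addr0 // => c cx.
by rewrite ebaseE eq_sym (negbTE cx) mulr0.
Qed.

Lemma w'_r i a l : w' i a (rshift m l) = 0.
Proof.
rewrite /w'; case: (fintype.split a) => // l'.
by rewrite big1 // => k _; rewrite ebaseE eq_lrshift mulr0.
Qed.

Lemma cw j i a q : \sum_c w j c q * w' i a c =
  match fintype.split a with inl _ => 0 | inr l => \sum_(k < m) A l i k * sigma k j end.
Proof.
rewrite /w'; case: (fintype.split a) => [k|l].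
  by rewrite big1 // => c _; rewrite mulr0.
under eq_bigr => c _ do rewrite mulr_sumr.
rewrite exchange_big /=; apply: eq_bigr => k _.
under eq_bigr => c _ do rewrite mulrCA.
by rewrite -mulr_sumr sum_delta /w split_l.
Qed.

Lemma XXE j i g q : (forall a c, derivable (partial a g) q (e c)) ->
  X j (X i g) q = \sum_a (\sum_c w j c q * w' i a c) * partial a g q
    + \sum_c \sum_a w j c q * w i a q * partial c (partial a g) q.
Proof.
move=> H; rewrite XopE.
have -> : \sum_c w j c q * partial c (X i g) q = \sum_c \sum_a
   (w j c q * w' i a c * partial a g q + w j c q * w i a q * partial c (partial a g) q).
  apply: eq_bigr => c _; rewrite (pX i g q c (fun a => H a c)) mulr_sumr; apply: eq_bigr => a _; exact: L6.
rewrite (eq_bigr (fun c => \sum_a w j c q * w' i a c * partial a g q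
   + \sum_a w j c q * w i a q * partial c (partial a g) q)); last first.
  by move=> c _; rewrite big_split.
rewrite big_split /=; congr (_ + _).
rewrite exchange_big /=; apply: eq_bigr => a _.
by rewrite mulr_suml.
Qed.

Lemma comm j i g q : (forall a c, derivable (partial a g) q (e c)) -> sym2 g q ->
  X j (X i g) q - X i (X j g) q = \sum_(l < d) Gmat sigma A l i j * dy l g q.
Proof.
move=> H S; rewrite !XXE //.
have -> : \sum_c \sum_a w i c q * w j a q * partial c (partial a g) q
        = \sum_c \sum_a w j c q * w i a q * partial c (partial a g) q.
  rewrite exchange_big /=; apply: eq_bigr => c _; apply: eq_bigr => a _.
  by rewrite S [w i _ q * _]mulrC.
rewrite L7 -sumrB big_split_ord /=.
rewrite big1 ?add0r; last first.
  by move=> k _; rewrite !cw split_l mul0r subrr.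
apply: eq_bigr => l _; rewrite !cw split_r -mulrBl /dy; congr (_ * _).
rewrite /Gmat !mxE; congr (_ - _); apply: eq_bigr => k _; rewrite !mxE //; exact: mulrC.
Qed.

Lemma dyX j g l q : (forall a, derivable (partial a g) q (e (rshift m l))) ->
  sym2 g q -> dy l (X j g) q = X j (dy l g) q.
Proof.
move=> H S; rewrite /dy (pX j g q (rshift m l) H) XopE; apply: eq_bigr => a _.
by rewrite w'_r mul0r add0r S.
Qed.


Lemma pD (u v : P -> R) a q : derivable u q (e a) -> derivable v q (e a) ->
  partial a (fun x => u x + v x) q = partial a u q + partial a v q.
Proof.
move=> du dv.
exact: (@derive_val _ _ _ _ _ _ _ (isd_add (derivableP du) (derivableP dv))).
Qed.

Lemma dD (u v : P -> R) a q : derivable u q (e a) -> derivable v q (e a) ->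
  derivable (fun x => u x + v x) q (e a).
Proof. by move=> du dv; exact: (@ex_derive _ _ _ _ _ _ _ (isd_add (derivableP du) (derivableP dv))). Qed.

Lemma pXfun i g c : (forall a q, derivable (partial a g) q (e c)) ->
  partial c (X i g) = fun q =>
  \sum_(a < m + d) (w' i a c * partial a g q + w i a q * partial c (partial a g) q).
Proof. by move=> H; apply/funext => q; rewrite (pX i g q c (fun a => H a q)). Qed.

Lemma symX j g q : (forall a b x, derivable (partial a g) x (e b)) ->
  (forall a b c, derivable (partial b (partial a g)) q (e c)) ->
  (forall b, sym2 (partial b g) q) -> sym2 (X j g) q.
Proof.
move=> D2 D3 S a c.
rewrite (pXfun j g a (fun b x => D2 b a x)) (pXfun j g c (fun b x => D2 b c x)).
rewrite !pS; first last.
- move=> b; apply: dD; [apply: dZ; apply: D2 | apply: dM; [exact: dw | apply: D3]].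
- move=> b; apply: dD; [apply: dZ; apply: D2 | apply: dM; [exact: dw | apply: D3]].
apply: eq_bigr => b _.
rewrite !pD; first last.
- apply: dM; [exact: dw | apply: D3].
- apply: dZ; apply: D2.
- apply: dM; [exact: dw | apply: D3].
- apply: dZ; apply: D2.
have E1 := @pZ (w' j b a) (partial b g) c q (D2 b c q).
have E3 := @pZ (w' j b c) (partial b g) a q (D2 b a q).
have E2 : partial c (fun x => w j b x * partial a (partial b g) x) q =
    w j b q * partial c (partial a (partial b g)) q + partial a (partial b g) q * w' j b c.
  rewrite (@pM (w j b) (partial a (partial b g)) c q (@dw j b q c) (D3 b a c)).
  congr (_ + _ * _); exact: (@derive_val _ _ _ _ _ _ _ (isd_w j b q c)).
have E4 : partial a (fun x => w j b x * partial c (partial b g) x) q =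
    w j b q * partial a (partial c (partial b g)) q + partial c (partial b g) q * w' j b a.
  rewrite (@pM (w j b) (partial c (partial b g)) a q (@dw j b q a) (D3 b c a)).
  congr (_ + _ * _); exact: (@derive_val _ _ _ _ _ _ _ (isd_w j b q a)).
rewrite E1 E2 E3 E4 (S b a c).
exact: L5.
Qed.
Lemma half_double (y : R) : 2^-1 * (y + y) = y.
Proof. by field. Qed.

Section Main.
Opaque Xop derive.
Variable f : P -> R.
Hypothesis d1 : forall a q, derivable f q (e a).
Hypothesis d2 : forall a b q, derivable (partial a f) q (e b).
Hypothesis d3 : forall a b c q, derivable (partial b (partial a f)) q (e c).
Hypothesis sf : forall q, sym2 f q.
Hypothesis sf' : forall b q, sym2 (partial b f) q.

Lemma dXf i c q : derivable (X i f) q (e c).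
Proof. exact (@dX i f q c (fun a => @d2 a c q)). Qed.

Lemma ddXf i a c q : derivable (partial a (X i f)) q (e c).
Proof.
rewrite (pXfun i f a (fun b x => @d2 b a x)); apply: dS => b.
by apply: dD; [apply: dZ; exact: d2 | apply: dM; [exact: dw | exact: d3]].
Qed.

Lemma dXXf j i c q : derivable (X j (X i f)) q (e c).
Proof. exact (@dX j (X i f) q c (fun a => ddXf i a c q)). Qed.

Lemma dXdyf j l c q : derivable (X j (dy l f)) q (e c).
Proof. exact (@dX j (dy l f) q c (fun a => @d3 (rshift m l) a c q)). Qed.

Lemma symXf j q : sym2 (X j f) q.
Proof. exact: (symX j f q) (fun a b x => @d2 a b x) (fun a b c => @d3 a b c q) (fun b => @sf' b q). Qed.

Lemma dyXf j l : dy l (X j f) = X j (dy l f).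
Proof. by apply/funext => q; rewrite dyX // => a; exact: d2. Qed.

Lemma XGam j q : X j (Gam sigma A f f) q = \sum_i X i f q * X j (X i f) q.
Proof.
rewrite /Gam XopZ; last by move=> a; apply: dS => i; apply: dM; exact: dXf.
rewrite XopS; last by move=> i a; apply: dM; exact: dXf.
rewrite mulr_sumr; apply: eq_bigr => i _.
by rewrite XopM; [rewrite half_double | exact: (dXf i ^~ q) | exact: (dXf i ^~ q)].
Qed.

Lemma LGam p : Lop sigma A (Gam sigma A f f) p =
  2^-1 * \sum_j \sum_i (X j (X i f) p ^+ 2 + X i f p * X j (X j (X i f)) p).
Proof.
rewrite /Lop; congr (_ * _); apply: eq_bigr => j _.
rewrite (_ : X j (Gam sigma A f f) = fun q => \sum_i X i f q * X j (X i f) q);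
  last by apply/funext => q; rewrite XGam.
rewrite XopS; last by move=> i a; apply: dM; [exact: dXf | exact: dXXf].
apply: eq_bigr => i _.
rewrite XopM; [|exact: (dXf i ^~ p)|exact: (dXXf j i ^~ p)].
rewrite expr2; exact: addrC.
Qed.

Lemma GLf p : Gam sigma A f (Lop sigma A f) p =
  2^-1 * \sum_i X i f p * (2^-1 * \sum_j X i (X j (X j f)) p).
Proof.
rewrite /Gam; congr (_ * _); apply: eq_bigr => i _; congr (_ * _).
rewrite /Lop XopZ; last by move=> a; apply: dS => j; exact: dXXf.
rewrite XopS //; move=> j a; exact: dXXf.
Qed.

Definition crossS i j p := \sum_(l < d) Gmat sigma A l i j * X j (dy l f) p.

Lemma antisym i j p : X j (X i f) p - X i (X j f) p = \sum_l Gmat sigma A l i j * dy l f p.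
Proof. exact: (comm j i f p (fun a c => @d2 a c p) (@sf p)). Qed.

Lemma T3 i j p : X j (X j (X i f)) p - X i (X j (X j f)) p = 2 * crossS i j p.
Proof.
have e1 : X j (X j (X i f)) p - X j (X i (X j f)) p = crossS i j p.
  rewrite -XopB; [|exact: (dXXf j i ^~ p)|exact: (dXXf i j ^~ p)].
  rewrite (_ : (fun x => X j (X i f) x - X i (X j f) x) =
               fun x => \sum_l Gmat sigma A l i j * dy l f x);
    last by apply/funext => x; rewrite antisym.
  rewrite XopS; last by move=> l a; apply: dZ; exact: d2.
  rewrite /crossS; apply: eq_bigr => l _; rewrite XopZ //; move=> a; exact: d2.
have e2 : X j (X i (X j f)) p - X i (X j (X j f)) p = crossS i j p.
  rewrite comm; [|by move=> a c; exact: ddXf|exact: symXf].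
  rewrite /crossS; apply: eq_bigr => l _; congr (_ * _).
  exact: (congr1 (fun h => h p) (dyXf j l)).
exact: (L9 _ _ _ _ e1 e2).
Qed.

Lemma XGZ j q : X j (GamZ f f) q = \sum_l dy l f q * X j (dy l f) q.
Proof.
rewrite /GamZ XopZ; last by move=> a; apply: dS => l; apply: dM; exact: d2.
rewrite XopS; last by move=> l a; apply: dM; exact: d2.
rewrite mulr_sumr; apply: eq_bigr => l _.
by rewrite XopM; [rewrite half_double | exact: (d2 (rshift m l) ^~ q) | exact: (d2 (rshift m l) ^~ q)].
Qed.

Lemma LGZ p : Lop sigma A (GamZ f f) p =
  2^-1 * \sum_j \sum_l (X j (dy l f) p ^+ 2 + dy l f p * X j (X j (dy l f)) p).
Proof.
rewrite /Lop; congr (_ * _); apply: eq_bigr => j _.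
rewrite (_ : X j (GamZ f f) = fun q => \sum_l dy l f q * X j (dy l f) q);
  last by apply/funext => q; rewrite XGZ.
rewrite XopS; last by move=> l a; apply: dM; [exact: d2 | exact: dXdyf].
apply: eq_bigr => l _.
rewrite XopM; [|exact: (d2 (rshift m l) ^~ p)|exact: (dXdyf j l ^~ p)].
rewrite expr2; exact: addrC.
Qed.

Lemma GZLf p : GamZ f (Lop sigma A f) p =
  2^-1 * \sum_l dy l f p * (2^-1 * \sum_j X j (X j (dy l f)) p).
Proof.
rewrite /GamZ; congr (_ * _); apply: eq_bigr => l _; congr (_ * _).
rewrite /Lop /dy pZ; last by apply: dS => j; exact: dXXf.
rewrite pS; last by move=> j; exact: dXXf.
congr (_ * _); apply: eq_bigr => j _.
rewrite -/(dy l _) dyX; [|by move=> a; exact: ddXf|exact: symXf].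
by rewrite dyXf.
Qed.

Lemma Gam2E p : Gam2 sigma A f p =
  4^-1 * \sum_i \sum_j X j (X i f) p ^+ 2 + 2^-1 * \sum_i \sum_j X i f p * crossS i j p.
Proof.
rewrite /Gam2 LGam GLf exchange_big /=.
rewrite !mulr_sumr -sumrB -big_split /=; apply: eq_bigr => i _.
rewrite !mulr_sumr -sumrB -big_split /=; apply: eq_bigr => j _.
exact: (L11 _ _ _ _ _ (T3 i j p)).
Qed.

Lemma Gam2ZE p : Gam2Z sigma A f p = 4^-1 * \sum_j \sum_l X j (dy l f) p ^+ 2.
Proof.
rewrite /Gam2Z LGZ GZLf.
have E : \sum_l dy l f p * (2^-1 * \sum_j X j (X j (dy l f)) p)
   = \sum_j \sum_l dy l f p * (2^-1 * X j (X j (dy l f)) p).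
  rewrite exchange_big /=; apply: eq_bigr => l _; by rewrite !mulr_sumr.
rewrite E !mulr_sumr -sumrB; apply: eq_bigr => j _.
rewrite ?mulr_sumr -sumrB; apply: eq_bigr => l _.
exact: L12.
Qed.

Lemma main_ineq (lam r : R) p : (0 < m)%N -> hor (Gmat sigma A) lam -> 0 < r ->
  (Lop sigma A f p) ^+ 2 / m%:R + lam / 2 * GamZ f f p / 4
  - c1f (Gmat sigma A) / r * Gam sigma A f f p
  <= Gam2 sigma A f p + r * Gam2Z sigma A f p.
Proof.
move=> m0 hl r0.
have _ := d1.
rewrite Gam2E Gam2ZE.
have EL : Lop sigma A f p = 2^-1 * \sum_i X i (X i f) p by [].
have EG : Gam sigma A f f p = 2^-1 * \sum_i X i f p ^+ 2.
  by rewrite /Gam; congr (_ * _); apply: eq_bigr => i _; exact: (esym (expr2 _)).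
have EZ : GamZ f f p = 2^-1 * \sum_l dy l f p ^+ 2.
  by rewrite /GamZ; congr (_ * _); apply: eq_bigr => l _; exact: (esym (expr2 _)).
rewrite EL EG EZ.
have P1 := @part1 R m d (fun i j => X j (X i f) p) (fun l => dy l f p) (Gmat sigma A) lam m0 hl
  (fun i j => antisym i j p).
have P2 := part2 (fun i => X i f p) (fun j l => X j (dy l f) p) (Gmat sigma A) r0.
rewrite /= in P1 P2.
rewrite /crossS.
exact: (L13 P1 P2).
Qed.

End Main.

End Ops.

Definition c2f (R : realType) (m d : nat) (G : 'I_d -> 'M[R]_m) : R :=
  match pselect (exists lam, hor G lam) with
  | left h => sval (cid h) / 2
  | right _ => 1 end.

Unset Implicit Arguments.
Local Close Scope classical_set_scope.

Theorem lemma4p2 (R : realType) (m d : nat) (hm : (2 <= m)%N) (hd : (1 <= d)%N) :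
  exists c1 c2 : ('I_d -> 'M[R]_m) -> R,
  forall (sigma : 'M[R]_m) (A : 'I_d -> 'M[R]_m),
    sigma \in unitmx ->
    (exists2 lam : R, 0 < lam &
       forall a : 'I_d -> R,
         lam * \sum_(l < d) a l ^+ 2 <=
         \sum_(i < m) \sum_(j < m)
            (\sum_(l < d) Gmat sigma A l i j * a l) ^+ 2) ->
    0 < c1 (Gmat sigma A) /\ 0 < c2 (Gmat sigma A) /\
    forall f : 'rV[R]_(m + d) -> R, C3 f ->
    forall r : R, 0 < r ->
    forall p : 'rV[R]_(m + d),
      (Lop sigma A f p) ^+ 2 / m%:R
      + c2 (Gmat sigma A) * GamZ f f p / 4
      - c1 (Gmat sigma A) / r * Gam sigma A f f p
      <= Gam2 sigma A f p + r * Gam2Z sigma A f p.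
Proof.
exists (fun G => c1f G), (fun G => c2f R m d G).
move=> sigma A _ [lam lam0 Hlam].
have hG : hor (Gmat sigma A) lam by split.
have [lam' [hl' E2]] : exists lam', hor (Gmat sigma A) lam' /\
    c2f R m d (Gmat sigma A) = lam' / 2.
  rewrite /c2f; case: pselect => [h|n]; last by exfalso; apply: n; exists lam.
  by exists (sval (cid h)); split => //; exact: (svalP (cid h)).
split.
  rewrite /c1f.
  have : 0 <= \sum_(l < d) \sum_(i < m) \sum_(j < m) Gmat sigma A l i j ^+ 2.
    by apply: sumr_ge0 => l _; apply: sumr_ge0 => i _; apply: sumr_ge0 => j _;
      exact: sqr_ge0.
  set S := \sum_(l < d) _; move=> S0; lra.
split.
  by rewrite E2 divr_gt0 //; case: hl'.
move=> f [_ [d1 [_ [d2 [c2 [d3 c3]]]]]] r r0 p.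
rewrite E2.
have sf : forall q, sym2 R m d f q.
  move=> q a b.
  exact: clairaut (d1 a) (d1 b) (d2 a b) (d2 b a) (c2 a b q) (c2 b a q).
have sf' : forall b q, sym2 R m d (partial b f) q.
  move=> b q a c.
  exact: clairaut (d2 b a) (d2 b c) (d3 b a c) (d3 b c a) (c3 b a c q) (c3 b c a q).
exact: (main_ineq R m d sigma A f d1 d2 d3 sf sf' lam' r p (leq_trans (isT : (1 <= 2)%N) hm) hl' r0).
Qed.
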